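(* Let $S \subseteq \mathbb{R}^n$ be nonempty, closed and convex, let $F = (F_1,\dots,F_m)^\top \colon S\to\mathbb{R}^m$ be continuous with each $F_i$ $\sigma_i$-convex for some $\sigma_i > 0$, let $\ell \ge 0$, and define $u_\ell(x) := \sup_{y \in S}\min_{i=1,\dots,m}\{F_i(x) - F_i(y) - \frac{\ell}{2}\|x-y\|^2\}$, $x \in S$. Let $\sigma := \min_{i} \sigma_i$ and \[ \upsilon(\sigma) := \begin{cases} \frac{\sigma - \ell}{2}, & \text{if } \ell < \sigma/2,\\ \frac{\sigma^2}{8\ell}, & \text{otherwise}. \end{cases} \] Then $u_\ell(x) \ge \upsilon(\sigma) \inf_{x^\ast \in X^\ast}\|x - x^\ast\|^2$ for all $x \in S$, where $X^\ast$ is the set of Pareto optimal solutions of $\min_{x\in S}F(x)$.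
   Context: A function $h\colon S\to\mathbb{R}$ is $\sigma$-convex if $h(\alpha x + (1-\alpha)y) \le \alpha h(x) + (1-\alpha)h(y) - \frac{\alpha(1-\alpha)\sigma}{2}\|x-y\|^2$ for all $x,y\in S$, $\alpha\in[0,1]$. A point $x^\ast\in S$ is Pareto optimal if there is no $x\in S$ with $F_i(x)\le F_i(x^\ast)$ for all $i$ and $F(x)\ne F(x^\ast)$. *)

(* Defs.v *)
(* R^n is modelled by row vectors 'rV[R]_n with the
   product (= Euclidean) topology; the Euclidean norm is written out explicitly. *)
From HB Require Import structures.
From mathcomp Require Import all_boot all_order all_algebra.
From mathcomp Require Import all_classical all_reals all_analysis.
Import numFieldNormedType.Exports.
Set Implicit Arguments. Unset Strict Implicit. Unset Printing Implicit Defensive.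
Import Order.TTheory GRing.Theory Num.Theory.
Local Open Scope ring_scope.
Local Open Scope classical_set_scope.

Definition sqnorm {R : realType} {n : nat} (v : 'rV[R]_n) : R :=
  \sum_(j < n) v ord0 j ^+ 2.

Definition sigma_convex {R : realType} {n : nat} (S : set 'rV[R]_n)
  (h : 'rV[R]_n -> R) (sigma : R) : Prop :=
  forall x y a, S x -> S y -> 0 <= a <= 1 ->
    h (a *: x + (1 - a) *: y) <=
      a * h x + (1 - a) * h y - a * (1 - a) * sigma / 2 * sqnorm (x - y).

Definition pareto_optimal {R : realType} {n m : nat} (S : set 'rV[R]_n)
  (F : 'I_m -> 'rV[R]_n -> R) (xs : 'rV[R]_n) : Prop :=
  S xs /\ ~ exists x, S x /\ (forall i, F i x <= F i xs) /\
                      (fun i => F i x) <> (fun i => F i xs).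

Definition u_merit {R : realType} {n m : nat} (S : set 'rV[R]_n)
  (F : 'I_m -> 'rV[R]_n -> R) (l : R) (x : 'rV[R]_n) : \bar R :=
  ereal_sup [set \big[Order.min/+oo%E]_(i < m)
                 ((F i x - F i y - l / 2 * sqnorm (x - y))%:E) | y in S].

Definition upsilon {R : realType} (l sigma : R) : R :=
  if l < sigma / 2 then (sigma - l) / 2 else sigma ^+ 2 / (8 * l).

(* Main.v *)
Require Import Defs.
From HB Require Import structures.
From mathcomp Require Import all_boot all_order all_algebra.
From mathcomp Require Import all_classical all_reals all_analysis.
From mathcomp Require Import ring lra.
Import numFieldNormedType.Exports.
Import Order.TTheory GRing.Theory Num.Theory.
Local Open Scope ring_scope.
Local Open Scope classical_set_scope.

Section H.
Variables (R : realType) (n : nat).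
Implicit Types (v w : 'rV[R]_n).

Lemma sqnorm_ge0 v : 0 <= sqnorm v.
Proof. by apply: sumr_ge0 => j _; rewrite sqr_ge0. Qed.

Lemma sqnormZ (c : R) v : sqnorm (c *: v) = c ^+ 2 * sqnorm v.
Proof. by rewrite /sqnorm mulr_sumr; apply: eq_bigr => j _; rewrite mxE exprMn. Qed.

Lemma sqnorm_eq0 v : sqnorm v = 0 -> v = 0.
Proof.
move=> /eqP; rewrite psumr_eq0 => [/allP H|j _]; last by rewrite sqr_ge0.
apply/rowP => j; rewrite mxE.
by have := H j (mem_index_enum _); rewrite /= sqrf_eq0 => /eqP.
Qed.

Lemma norm_sq_le v : `|v| ^+ 2 <= sqnorm v.
Proof.
have -> : `|v| = mx_norm v by [].
rewrite mx_normrE.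
set B := (X in X ^+ 2 <= _).
suff : 0 <= B /\ B ^+ 2 <= sqnorm v by case.
apply: (big_ind (fun a => 0 <= a /\ a ^+ 2 <= sqnorm v)).
- by rewrite expr0n /= lexx sqnorm_ge0.
- move=> a b [a0 ha] [b0 hb]; rewrite /Num.max; case: ifP => _; by split.
- move=> [i j] _ /=; split => //; rewrite (ord1 i) real_normK ?num_real //.
  rewrite /sqnorm (bigD1 j) //= lerDl; apply: sumr_ge0 => k _; exact: sqr_ge0.
Qed.
End H.
Arguments sqnorm_ge0 {R n}.
Arguments sqnormZ {R n}.
Arguments sqnorm_eq0 {R n}.
Arguments norm_sq_le {R n}.

Section G.
Variables (R : realType) (n m : nat) (i0 : 'I_m) (S : set 'rV[R]_n)
  (F : 'I_m -> 'rV[R]_n -> R) (x : 'rV[R]_n).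

Definition G y := \big[Num.max/(F i0 y - F i0 x)]_(i < m) (F i y - F i x).

Lemma G_ge i y : F i y - F i x <= G y.
Proof. by rewrite /G (bigD1 i) //= le_max lexx. Qed.

Lemma G_le y c : (forall i, F i y - F i x <= c) -> G y <= c.
Proof.
move=> H; apply: (big_ind (fun a => a <= c)) => //.
by move=> a b ha hb; rewrite ge_max ha hb.
Qed.

Lemma G_x : G x = 0.
Proof.
apply/le_anti; rewrite G_le /=; last by move=> i; rewrite subrr.
by have := G_ge i0 x; rewrite subrr.
Qed.

Lemma G_cont : (forall i, {within S, continuous (F i)}) -> {within S, continuous G}.
Proof.
move=> Fc.
have hc : forall i, continuous ((fun y => F i y - F i x) : subspace S -> R).
  move=> i y; apply: cvgB; [exact: Fc | exact: cvg_cst].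
rewrite /G; elim: (index_enum _) => [|a r IH].
  under eq_fun do rewrite big_nil. exact: hc.
under eq_fun do rewrite big_cons.
have := (@max_fun_continuous _ (subspace S) _ (fun y => F a y - F a x) _ (hc a) IH).
exact.
Qed.
End G.
Arguments G {R n m}.
Arguments G_ge {R n m}.
Arguments G_le {R n m}.
Arguments G_x {R n m}.
Arguments G_cont {R n m}.

Lemma convS (R : realType) n (S : set 'rV[R]_n) : convex_set S ->
  forall a x y, 0 <= a <= 1 -> S x -> S y -> S (a *: x + (1 - a) *: y).
Proof.
move=> cS a x y /andP[a0 a1] Sx Sy.
have P : Itv.spec (@Itv.num_sem R) (Itv.Real (Interval (BLeft 0%Z) (BRight 1%Z))) a.
  by rewrite /Itv.spec /Itv.num_sem /= in_itv /= a0 a1 andbT ger0_real.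
have := cS x y (@Itv.mk _ _ (Itv.Real (Interval (BLeft 0%Z) (BRight 1%Z))) a P).
rewrite !inE; move=> /(_ Sx Sy); exact.
Qed.

Lemma sigma_convex_mono (R : realType) n (S : set 'rV[R]_n) h s1 s2 :
  sigma_convex S h s1 -> s2 <= s1 -> sigma_convex S h s2.
Proof.
move=> H le y z a Sy Sz /andP[a0 a1].
apply: (le_trans (H y z a Sy Sz _)); first by rewrite a0 a1.
have D0 := sqnorm_ge0 (y - z).
have aa : 0 <= a * (1 - a) by rewrite mulr_ge0 // subr_ge0.
rewrite lerD2l lerN2; apply: ler_wpM2r => //; apply: ler_wpM2r => //.
by rewrite ler_wpM2l.
Qed.

Lemma G_convex (R : realType) n m i0 (S : set 'rV[R]_n) (F : 'I_m -> 'rV[R]_n -> R) x s :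
  (forall i, sigma_convex S (F i) s) -> sigma_convex S (G i0 F x) s.
Proof.
move=> H y z a Sy Sz a01; apply: G_le => i.
have h := H i y z a Sy Sz a01.
case/andP: a01 => a0 a1.
have h1 : a * (F i y - F i x) <= a * G i0 F x y by apply: ler_wpM2l => //; exact: G_ge.
have h2 : (1 - a) * (F i z - F i x) <= (1 - a) * G i0 F x z.
  by apply: ler_wpM2l; [lra | exact: G_ge].
set T := a * (1 - a) * s / 2 * sqnorm (y - z).
move: h h1 h2; rewrite -/T; set P := F i (a *: y + (1 - a) *: z).
move=> h h1 h2; rewrite !mulrBr in h1 h2; lra.
Qed.

Lemma cont_ball (R : realType) n (S : set 'rV[R]_n) (g : 'rV[R]_n -> R) x :
  {within S, continuous g} -> S x ->
  exists2 d, 0 < d & forall z, S z -> `|x - z| < d -> g x - 1 < g z.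
Proof.
move=> gc Sx.
have := (@subspace_continuousP _ S _ g).1 gc x Sx.
move=> /cvgr_dist_lt /(_ 1 ltr01).
rewrite near_withinE => /nbhs_ballP [d d0 H]; exists d => // z Sz xz.
have := H z; rewrite -ball_normE /= => /(_ xz Sz).
rewrite ltr_norml => /andP[_]; lra.
Qed.

Arguments cont_ball {R n S g x}.
Arguments convS {R n S}.

Lemma coercive (R : realType) n (S : set 'rV[R]_n) (g : 'rV[R]_n -> R) x s :
  convex_set S -> S x -> 0 < s -> sigma_convex S g s -> {within S, continuous g} ->
  exists r, 0 <= r /\ forall y, S y -> g y <= g x -> `|x - y| <= r.
Proof.
move=> cS Sx s0 gcv gc.
have [d d0 Hd] := cont_ball gc Sx.
set e := Num.min d 1 / 2.
have e0 : 0 < e by rewrite divr_gt0 // lt_min d0 ltr01.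
have ed : e < d.
  rewrite /e; have := ge_min d d 1; rewrite lexx /= => _.
  have : Num.min d 1 <= d by rewrite ge_min lexx.
  have : 0 < Num.min d 1 by rewrite lt_min d0 ltr01.
  lra.
have e1 : e <= 1 / 2.
  rewrite /e; have : Num.min d 1 <= 1 by rewrite ge_min lexx orbT.
  lra.
have es0 : 0 < e * s by rewrite mulr_gt0.
exists (1 + 8 / (e * s)); split.
  by rewrite addr_ge0 // divr_ge0 // ltW.
move=> y Sy gy; set N := `|x - y|.
have N0 : 0 <= N by rewrite normr_ge0.
have [N1|N1] := leP N 1.
  by apply: (le_trans N1); rewrite lerDl divr_ge0 // ltW.
set t := e / (N + 1).
have tpos : 0 < t by rewrite divr_gt0 // ltr_wpDl // ltW.
have tN : t * (N + 1) = e by rewrite /t mulfVK // gt_eqF // ltr_wpDl.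
have t12 : t <= 1 / 2.
  have : t * 1 <= t * (N + 1) by rewrite ler_pM2l //; lra.
  lra.
have t01 : 0 <= t <= 1 by rewrite (ltW tpos) /=; lra.
have Sz := convS cS t y x t01 Sy Sx.
set z := t *: y + (1 - t) *: x in Sz.
have xz : x - z = t *: (x - y).
  by rewrite /z scalerBl scale1r scalerBr; apply/rowP => j; rewrite !mxE; ring.
have nxz : `|x - z| < d.
  rewrite xz normrZ gtr0_norm // -/N.
  have : t * N <= t * (N + 1) by rewrite ler_pM2l //; lra.
  lra.
have h1 := Hd z Sz nxz.
have h2 := gcv y x t Sy Sx t01; rewrite -/z in h2.
set D := sqnorm (y - x) in h2.
have DN : N ^+ 2 <= D.
  rewrite /D (_ : y - x = (-1) *: (x - y)); last by rewrite scaleN1r opprB.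
  by rewrite sqnormZ sqrrN expr1n mul1r norm_sq_le.
have D0 : 0 <= D by exact: sqnorm_ge0.
have h3 : t * (1 - t) * s / 2 * D < 1.
  have : t * g y <= t * g x by rewrite ler_wpM2l // ltW.
  move: h1 h2; set T := t * (1 - t) * s / 2 * D; lra.
have h4 : t * s / 4 * N ^+ 2 <= t * (1 - t) * s / 2 * D.
  have ts : 0 <= t * s by rewrite mulr_ge0 // ltW.
  have A : t * s / 4 * N ^+ 2 <= t * s / 4 * D by rewrite ler_wpM2l // divr_ge0.
  apply: (le_trans A).
  rewrite (_ : t * (1 - t) * s / 2 * D = (t * s) * ((1 - t) / 2 * D)); last by ring.
  rewrite (_ : t * s / 4 * D = (t * s) * (1 / 4 * D)); last by ring.
  rewrite ler_wpM2l //; apply: ler_wpM2r => //; lra.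
have h5 : e * s * N ^+ 2 < 4 * (N + 1).
  have : t * s * N ^+ 2 < 4 by lra.
  move=> h; rewrite -tN.
  have h' : t * s * N ^+ 2 * (N + 1) < 4 * (N + 1) by rewrite ltr_pM2r // ltr_wpDl.
  by rewrite (_ : t * (N + 1) * s * N ^+ 2 = t * s * N ^+ 2 * (N + 1)); last ring.
have h6 : e * s * N < 8.
  have : e * s * N ^+ 2 < 8 * N by lra.
  rewrite expr2 mulrA => h.
  by rewrite -(ltr_pM2r (lt_trans ltr01 N1)).
have : N < 8 / (e * s) by rewrite ltr_pdivlMr // mulrC.
lra.
Qed.

Lemma ball_bounded (R : realType) n (x : 'rV[R]_n) r :
  bounded_set (closed_ball_ Num.norm x r).
Proof.
change (\forall M \near +oo, globally (closed_ball_ Num.norm x r) [set y | `|y| <= M]).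
near=> M => y /= hy.
have h : `|y| <= `|x| + r.
  have -> : y = x - (x - y) by rewrite opprB addrC subrK.
  apply: (le_trans (ler_normB _ _)); rewrite lerD2l.
  exact: hy.
apply: (le_trans h); near: M; apply: nbhs_pinfty_ge; exact: num_real.
Unshelve. all: end_near.
Qed.

Lemma min_key (R : realType) n (S : set 'rV[R]_n) (g : 'rV[R]_n -> R) s xb x :
  convex_set S -> S x -> S xb -> sigma_convex S g s -> 0 < s ->
  (forall y, S y -> g xb <= g y) -> g xb <= g x - s / 2 * sqnorm (x - xb).
Proof.
move=> cS Sx Sxb gcv s0 gmin.
set D := sqnorm (x - xb).
have D0 : 0 <= D by exact: sqnorm_ge0.
have H : forall a, 0 < a -> a <= 1 -> g xb <= g x - (1 - a) * s / 2 * D.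
  move=> a a0 a1.
  have a01 : 0 <= a <= 1 by rewrite (ltW a0) a1.
  have h1 := gmin _ (convS cS a x xb a01 Sx Sxb).
  have h2 := gcv x xb a Sx Sxb a01.
  have h3 : a * g xb <= a * (g x - (1 - a) * s / 2 * D).
    move: h1 h2; rewrite -/D; move=> h1 h2.
    rewrite (_ : a * (g x - (1 - a) * s / 2 * D) = a * g x - a * (1 - a) * s / 2 * D); last by ring.
    lra.
  by rewrite ler_pM2l in h3.
rewrite leNgt; apply/negP => hlt.
set e := g xb - (g x - s / 2 * D).
have e0 : 0 < e by rewrite /e subr_gt0.
have sD : 0 <= s * D by rewrite mulr_ge0 // ltW.
have eD : 0 < e + s * D by rewrite ltr_wpDr.
set a := e / (e + s * D).
have a0 : 0 < a by rewrite divr_gt0.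
have a1 : a <= 1 by rewrite ler_pdivrMr // mul1r lerDl.
have aE : a * (e + s * D) = e by rewrite /a mulfVK // gt_eqF.
have ae : 0 <= a * e by rewrite mulr_ge0 // ltW.
have := H a a0 a1.
have -> : g x - (1 - a) * s / 2 * D = g x - s / 2 * D + (a * (s * D)) / 2 by ring.
move: aE; rewrite mulrDr => aE.
rewrite /e in e0 aE ae; lra.
Qed.

Lemma ups_le (R : realType) (l s : R) : 0 < s -> 0 <= l ->
  exists t, 0 <= t <= 1 /\
    upsilon l s <= t * s / 2 + t * (1 - t) * s / 2 - l / 2 * t ^+ 2.
Proof.
move=> s0 l0; rewrite /upsilon; case: ifP => hl.
  exists 1; split; first by rewrite ler01 lexx.
  rewrite subrr expr1n !mulr1 mulr0 !mul0r mul1r; lra.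
have hl' : s / 2 <= l by rewrite leNgt hl.
have lp : 0 < l by lra.
exists (s / (2 * l)); split.
  apply/andP; split; first by rewrite divr_ge0 // ?mulr_ge0 // ltW.
  by rewrite ler_pdivrMr ?mulr_gt0 // mul1r; lra.
rewrite -subr_ge0.
have -> : s / (2 * l) * s / 2 + s / (2 * l) * (1 - s / (2 * l)) * s / 2 -
   l / 2 * (s / (2 * l)) ^+ 2 - s ^+ 2 / (8 * l) = s ^+ 2 * (2 * l - s) / (8 * l ^+ 2).
  by field; rewrite gt_eqF.
apply: divr_ge0; first by apply: mulr_ge0; [exact: sqr_ge0 | lra].
by apply: mulr_ge0; [lra | exact: sqr_ge0].
Qed.

Arguments coercive {R n S g x s}.
Arguments min_key {R n S g s xb x}.
Arguments sigma_convex_mono {R n S h s1 s2}.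

Theorem corollary6p2 (R : realType) (n m : nat) (hm : (0 < m)%N)
  (S : set 'rV[R]_n) (F : 'I_m -> 'rV[R]_n -> R) (sig : 'I_m -> R) (l : R) :
  S !=set0 -> closed S -> convex_set S ->
  (forall i, {within S, continuous (F i)}) ->
  (forall i, 0 < sig i) ->
  (forall i, sigma_convex S (F i) (sig i)) ->
  0 <= l ->
  let sigma := \big[Num.min/sig (Ordinal hm)]_(i < m) sig i in
  forall x, S x ->
    ((upsilon l sigma)%:E *
       ereal_inf [set (sqnorm (x - xs))%:E | xs in pareto_optimal S F] <=
     u_merit S F l x)%E.
Proof.
move=> S0 Sc cS Fc sig0 Fsc l0 sigma x Sx.
set i0 := Ordinal hm.
have sle : forall i, sigma <= sig i.
  by move=> i; rewrite /sigma (bigD1 i) //= ge_min lexx.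
have s0 : 0 < sigma.
  rewrite /sigma; apply: (big_ind (fun a => 0 < a)) => //.
  by move=> a b ha hb; rewrite lt_min ha hb.
have Fs : forall i, sigma_convex S (F i) sigma.
  by move=> i; apply: sigma_convex_mono (Fsc i) (sle i).
set g := G i0 F x.
have gcv : sigma_convex S g sigma by exact: G_convex.
have gc : {within S, continuous g} by exact: G_cont.
have gx : g x = 0 by exact: G_x.
have [r [r0 hr]] := coercive cS Sx s0 gcv gc.
set r1 := r + 1.
have r10 : 0 < r1 by rewrite /r1 ltr_wpDl.
set K := S `&` closed_ball x r1.
have inK : forall y, K y <-> S y /\ `|x - y| <= r1.
  by move=> y; rewrite /K closed_ballE.
have Kx : K x by apply/inK; split => //; rewrite subrr normr0 ltW.
have Kc : compact K.
  apply: (@subclosed_compact _ K (closed_ball x r1)).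
  - apply: closedI => //; exact: closed_ball_closed.
  - apply: bounded_closed_compact; last exact: closed_ball_closed.
    rewrite closed_ballE //; exact: ball_bounded.
  - by move=> y [].
have gcK : {within K, continuous g} by apply: continuous_subspaceW gc => y [].
have [xb xbK xbmin] := compact_EVT_min (ex_intro _ x Kx) Kc gcK.
rewrite inE in xbK; have [Sxb _] := (inK xb).1 xbK.
have gmin : forall y, S y -> g xb <= g y.
  move=> y Sy; have [h|h] := leP (g y) (g x).
    apply: xbmin; rewrite inE; apply/inK; split => //.
    by apply: (le_trans (hr y Sy h)); rewrite /r1 lerDl.
  apply: (le_trans _ (ltW h)); apply: xbmin; rewrite inE //.
have key := min_key cS Sx Sxb gcv s0 gmin.
rewrite gx sub0r in key.
set D := sqnorm (x - xb) in key.
have D0 : 0 <= D by exact: sqnorm_ge0.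
have keyi : forall i, F i xb <= F i x - sigma / 2 * D.
  by move=> i; have := G_ge i0 F x i xb; rewrite -/g; lra.
have par : pareto_optimal S F xb.
  split => // -[y [Sy [Hle Hne]]].
  have yxb : y != xb by apply/eqP => e; apply: Hne; rewrite e.
  have gy : g y <= g xb.
    by apply: G_le => i; apply: (le_trans _ (G_ge i0 F x i xb)); rewrite lerD2r.
  have h12 : 0 <= (1 / 2 : R) <= 1 by rewrite divr_ge0 //= ler_pdivrMr // mul1r ler1n.
  have Sw := convS cS (1 / 2) y xb h12 Sy Sxb.
  have h := gcv y xb (1 / 2) Sy Sxb h12.
  have := gmin _ Sw.
  have Dp : 0 < sqnorm (y - xb).
    rewrite lt_neqAle sqnorm_ge0 andbT eq_sym; apply/eqP => /sqnorm_eq0 /eqP.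
    by rewrite subr_eq0 (negbTE yxb).
  move: h; set W := g _; set Q := sqnorm (y - xb); move=> h.
  have : 0 < 1 / 2 * (1 - 1 / 2) * sigma / 2 * Q by rewrite !mulr_gt0 //; lra.
  lra.
have [t [t01 ht]] := @ups_le _ l sigma s0 l0.
have Sy := convS cS t xb x t01 Sxb Sx.
set y := t *: xb + (1 - t) *: x in Sy.
have Dsym : sqnorm (xb - x) = D.
  rewrite (_ : xb - x = (-1) *: (x - xb)); last by rewrite scaleN1r opprB.
  by rewrite sqnormZ sqrrN expr1n mul1r.
have Dy : sqnorm (x - y) = t ^+ 2 * D.
  rewrite -sqnormZ; congr sqnorm.
  by rewrite /y; apply/rowP => j; rewrite !mxE; ring.
have ups0 : 0 <= upsilon l sigma.
  rewrite /upsilon; case: ifP => h; first lra.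
  apply: divr_ge0; first exact: sqr_ge0.
  by apply: mulr_ge0 => //.
have termi : forall i, upsilon l sigma * D <= F i x - F i y - l / 2 * sqnorm (x - y).
  move=> i; have hy := Fs i xb x t Sxb Sx t01; rewrite Dsym -/y in hy.
  rewrite Dy.
  have h1 : t * (sigma / 2 * D) <= t * (F i x - F i xb).
    by apply: ler_wpM2l; [case/andP: t01 | have := keyi i; lra].
  have h2 : upsilon l sigma * D <= (t * sigma / 2 + t * (1 - t) * sigma / 2 - l / 2 * t ^+ 2) * D.
    by apply: ler_wpM2r.
  move: h1 h2 hy; set A := F i y; set B := F i xb; set C := F i x.
  move=> h1 h2 hy.
  rewrite mulrBr in h1.
  have E : (t * sigma / 2 + t * (1 - t) * sigma / 2 - l / 2 * t ^+ 2) * D =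
     t * (sigma / 2 * D) + t * (1 - t) * sigma / 2 * D - l / 2 * (t ^+ 2 * D) by ring.
  rewrite E in h2.
  lra.
apply: (@le_trans _ _ ((upsilon l sigma * D)%:E)).
  rewrite EFinM; apply: lee_wpmul2l; first by rewrite lee_fin.
  by apply: ereal_inf_lbound; exists xb.
apply: (@le_trans _ _ (\big[Order.min/+oo%E]_(i < m)
                 ((F i x - F i y - l / 2 * sqnorm (x - y))%:E))); last first.
  by apply: ereal_sup_ubound; exists y.
apply: (big_ind (fun v => ((upsilon l sigma * D)%:E <= v)%E)).
- exact: leey.
- by move=> a b ha hb; rewrite le_min ha hb.
- by move=> i _; rewrite lee_fin termi.
Qed.
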